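(* Let $\Phi\in\mathbb{R}^{z\times m}$ be a signalling scheme, $q$ a prior, and $\zeta^u$ a signal with $\sum_\ell\phi^u_\ell q_\ell>0$. For a flow $f\in\mathcal{H}$ let $S_u(f)$ be the set of $\psi\in\Delta_1^m$ such that $$\sum_{s\in[m]}\phi^u_s\big(C^{\theta_s}_p(f)-C^{\theta_s}_r(f)\big)\psi_s=0\ \text{ for all } p,r\in\mathcal{P} \text{ with } f_p>0,f_r>0,$$ $$\sum_{s\in[m]}\phi^u_s\big(C^{\theta_s}_p(f)-C^{\theta_s}_r(f)\big)\psi_s\le0\ \text{ for all } p,r\in\mathcal{P} \text{ with } f_p>0,f_r=0.$$ Then for any two $\widetilde q^{\zeta^u}$-WE $\widetilde f,\widehat f\in\mathcal{W}^{\widetilde q^{\zeta^u}}$ we have $S_u(\widetilde f)=S_u(\widehat f)$.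
   Context: Let $\mathcal{G}=(\mathcal{V},\mathcal{E})$ be a finite directed graph with an origin $v_o$ and a destination $v_d$, and let $\mathcal{P}$ be the (finite) set of acyclic directed paths from $v_o$ to $v_d$, $n=|\mathcal{P}|$. The set of feasible path-flows is $\mathcal{H}=\{f\in\mathbb{R}^n_{\ge0}:\sum_{p\in\mathcal{P}}f_p=1\}$. For a path-flow $f$, the flow on edge $e_k$ is $f_{e_k}=\sum_{p\ni e_k}f_p$. There is a finite set of states $\Theta=\{\theta_1,\dots,\theta_m\}$; in each state $\theta_s$ each edge $e_k$ has a known cost function $C^{\theta_s}_{e_k}:\mathbb{R}_{\ge0}\to\mathbb{R}_{\ge0}$ that is continuous and strictly increasing. The cost of path $p$ in state $\theta_s$ is $C^{\theta_s}_p(f)=\sum_{e_k\in p}C^{\theta_s}_{e_k}(f_{e_k})$. For $\varphi\in\Delta_1^m:=\{x\in\mathbb{R}^m_{\ge0}:\sum_i x_i=1\}$ the expected cost of path $p$ is $C^\varphi_p(f)=\sum_{s}\varphi_sC^{\theta_s}_p(f)$. A flow $f\in\mathcal{H}$ is a $\varphi$-based Wardrop equilibrium ($\varphi$-WE) if for all $p$ with $f_p>0$ we have $C^\varphi_p(f)\le C^\varphi_r(f)$ for all $r\in\mathcal{P}$; $\mathcal{W}^\varphi$ denotes the set of $\varphi$-WE. A prior is a $q\in\Delta_1^m$ with $q_s>0$ for all $s$. A (public) signalling scheme with signals $\zeta^1,\dots,\zeta^z$ is a column-stochastic matrix $\Phi=(\phi^u_s)\in\mathbb{R}^{z\times m}_{\ge0}$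 (each column sums to $1$), where $\phi^u_s$ is the probability of sending $\zeta^u$ in state $\theta_s$. The posterior after $\zeta^u$ is $\widetilde q^{\zeta^u}_s=\phi^u_sq_s/\sum_{\ell}\phi^u_\ell q_\ell$. *)

(* Defs.v *)
From HB Require Import structures.
From mathcomp Require Import all_boot all_order all_algebra.
From mathcomp Require Import classical_sets boolp reals topology normedtype.
Set Implicit Arguments. Unset Strict Implicit. Unset Printing Implicit Defensive.
Import Order.TTheory GRing.Theory Num.Theory.
Import numFieldNormedType.Exports.
Local Open Scope ring_scope.
Local Open Scope classical_set_scope.

(* A directed graph on vertex type V: the edge set is Ed : {set V * V};
   an edge e = (e.1, e.2) goes from e.1 to e.2. A path is a sequence of edges. *)

Fixpoint walk (V : finType) (Ed : {set V * V}) (vd x : V) (s : seq (V * V)) : bool :=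
  match s with
  | [::] => x == vd
  | e :: s' => [&& e \in Ed, e.1 == x & walk Ed vd e.2 s']
  end.

Definition od_path (V : finType) (Ed : {set V * V}) (vo vd : V) (s : seq (V * V)) : Prop :=
  walk Ed vd vo s /\ uniq (vo :: map snd s).

Definition enumerates_paths (V : finType) (Ed : {set V * V}) (vo vd : V)
  (paths : seq (seq (V * V))) : Prop :=
  uniq paths /\ forall p, p \in paths <-> od_path Ed vo vd p.

Section Traffic.
Variables (R : realType) (V : finType) (m : nat).
Variable (paths : seq (seq (V * V))).

Definition simplex (x : 'I_m -> R) : Prop :=
  (forall s, 0 <= x s) /\ \sum_(s < m) x s = 1.

(* feasible path flows H (path flows are functions on paths; only values on
   the enumerated paths matter) *)
Definition feasible (f : seq (V * V) -> R) : Prop :=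
  (forall p, p \in paths -> 0 <= f p) /\ \sum_(p <- paths) f p = 1.

Definition edge_flow (f : seq (V * V) -> R) (e : V * V) : R :=
  \sum_(p <- paths | e \in p) f p.

Definition path_cost (C : 'I_m -> V * V -> R -> R) (s : 'I_m)
  (p : seq (V * V)) (f : seq (V * V) -> R) : R :=
  \sum_(e <- p) C s e (edge_flow f e).

Definition exp_cost (C : 'I_m -> V * V -> R -> R) (phi : 'I_m -> R)
  (p : seq (V * V)) (f : seq (V * V) -> R) : R :=
  \sum_(s < m) phi s * path_cost C s p f.

Definition wardrop (C : 'I_m -> V * V -> R -> R) (phi : 'I_m -> R)
  (f : seq (V * V) -> R) : Prop :=
  feasible f /\
  forall p, p \in paths -> 0 < f p ->
    forall r, r \in paths -> exp_cost C phi p f <= exp_cost C phi r f.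

Definition admissible_costs (C : 'I_m -> V * V -> R -> R) : Prop :=
  forall s e,
    {within [set x : R | 0 <= x], continuous (C s e)} /\
    (forall x, 0 <= x -> 0 <= C s e x) /\
    (forall x y, 0 <= x -> x < y -> C s e x < C s e y).

Definition prior (q : 'I_m -> R) : Prop := simplex q /\ forall s, 0 < q s.

Definition signalling_scheme (z : nat) (Phi : 'M[R]_(z, m)) : Prop :=
  (forall u s, 0 <= Phi u s) /\ forall s, \sum_(u < z) Phi u s = 1.

Definition posterior (z : nat) (Phi : 'M[R]_(z, m)) (q : 'I_m -> R) (u : 'I_z)
  : 'I_m -> R :=
  fun s => Phi u s * q s / \sum_(l < m) Phi u l * q l.

Definition S_set (z : nat) (C : 'I_m -> V * V -> R -> R) (Phi : 'M[R]_(z, m))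
  (u : 'I_z) (f : seq (V * V) -> R) : set ('I_m -> R) :=
  [set psi | simplex psi /\
    (forall p r, p \in paths -> r \in paths -> 0 < f p -> 0 < f r ->
       \sum_(s < m) Phi u s * (path_cost C s p f - path_cost C s r f) * psi s = 0) /\
    (forall p r, p \in paths -> r \in paths -> 0 < f p -> f r = 0 ->
       \sum_(s < m) Phi u s * (path_cost C s p f - path_cost C s r f) * psi s <= 0)].

End Traffic.

(* Main.v *)
Require Import Defs.
From HB Require Import structures.
From mathcomp Require Import all_boot all_order all_algebra.
From mathcomp Require Import classical_sets boolp reals topology normedtype.
From mathcomp Require Import ring lra.
Import Order.TTheory GRing.Theory Num.Theory.
Import numFieldNormedType.Exports.
Local Open Scope ring_scope.
Local Open Scope classical_set_scope.

Section Aux.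
Variables (R : realType) (V : finType) (m : nat) (paths : seq (seq (V * V))).
Variable (C : 'I_m -> V * V -> R -> R).

Lemma path_cost_ext s p f1 f2 :
  (forall e, edge_flow paths f1 e = edge_flow paths f2 e) ->
  path_cost paths C s p f1 = path_cost paths C s p f2.
Proof. by move=> H; rewrite /path_cost; apply: eq_bigr => e _; rewrite H. Qed.

Definition Wc (phi : 'I_m -> R) f e :=
  \sum_(s < m) phi s * C s e (edge_flow paths f e).

Lemma exp_costE phi p f : exp_cost paths C phi p f = \sum_(e <- p) Wc phi f e.
Proof.
rewrite /exp_cost /Wc /path_cost.
under eq_bigr do rewrite mulr_sumr.
by rewrite exchange_big.
Qed.

Lemma additive (w : V * V -> R) f : (forall p, p \in paths -> uniq p) ->
  \sum_(p <- paths) f p * \sum_(e <- p) w e =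
  \sum_(e : V * V) w e * edge_flow paths f e.
Proof.
move=> Hu.
rewrite [RHS](eq_bigr (fun e => \sum_(p <- paths) (if e \in p then f p * w e else 0))); last first.
  by move=> e _; rewrite /edge_flow mulrC big_distrl /= big_mkcond.
rewrite exchange_big /= big_seq [RHS]big_seq.
apply: eq_bigr => p Hp.
by rewrite big_uniq ?Hu // mulr_sumr big_mkcond.
Qed.

Lemma exists_support (f : seq (V * V) -> R) : feasible paths f -> exists p0, p0 \in paths /\ 0 < f p0.
Proof.
case=> f0 f1.
case: (pselect (exists p0, p0 \in paths /\ 0 < f p0)) => // Hn; exfalso.
have : \sum_(p <- paths) f p = 0.
  rewrite big_seq big1 // => p Hp.
  apply/eqP; rewrite eq_le f0 // andbT leNgt; apply/negP => Hlt; apply: Hn; by exists p.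
by rewrite f1 => /eqP; rewrite oner_eq0.
Qed.

Lemma sum_at_min (f : seq (V * V) -> R) (X : seq (V * V) -> R) p0 : feasible paths f ->
  (forall p, p \in paths -> 0 < f p -> forall r, r \in paths -> X p <= X r) ->
  p0 \in paths -> 0 < f p0 ->
  \sum_(p <- paths) f p * X p = X p0.
Proof.
case=> f0 f1 HW Hp0 Hf0.
rewrite big_seq (eq_bigr (fun p => f p * X p0)); last first.
  move=> p Hp; have [->|Hpos] := eqVneq (f p) 0; first by rewrite !mul0r.
  have Hpos' : 0 < f p by rewrite lt_def Hpos f0.
  congr (_ * _); apply/le_anti; rewrite HW // HW //.
by rewrite -big_seq -big_distrl /= f1 mul1r.
Qed.

Lemma le_sum_we (f h X : seq (V * V) -> R) : feasible paths f -> feasible paths h ->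
  (forall p, p \in paths -> 0 < f p -> forall r, r \in paths -> X p <= X r) ->
  \sum_(p <- paths) f p * X p <= \sum_(p <- paths) h p * X p.
Proof.
move=> Ff [h0 h1] HW.
have [p0 [Hp0 Hf0]] := @exists_support f Ff.
rewrite (@sum_at_min f X p0 Ff HW Hp0 Hf0).
rewrite -[X p0]mul1r -h1 big_distrl /= big_seq [X in _ <= X]big_seq.
apply: ler_sum => p Hp; apply: ler_wpM2l; [exact: h0 | exact: HW p0 Hp0 Hf0 p Hp].
Qed.

Lemma min_support (f X : seq (V * V) -> R) c : feasible paths f ->
  (forall p, p \in paths -> c <= X p) ->
  \sum_(p <- paths) f p * X p = c ->
  forall p, p \in paths -> 0 < f p -> X p = c.
Proof.
case=> f0 f1 Hc Hs.
have H0 : \sum_(p <- paths) f p * (X p - c) = 0.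
  under eq_bigr do rewrite mulrBr.
  by rewrite sumrB Hs -big_distrl /= f1 mul1r subrr.
move=> p Hp Hfp.
move: H0 => /eqP; rewrite big_seq psumr_eq0; last first.
  by move=> i Hi; apply: mulr_ge0; [exact: f0 | rewrite subr_ge0 Hc].
move/allP => /(_ p Hp); rewrite Hp /= mulf_eq0 subr_eq0 => /orP[|/eqP //].
by rewrite gt_eqF.
Qed.


Lemma edge_flow_ge0 (f : seq (V * V) -> R) e : feasible paths f -> 0 <= edge_flow paths f e.
Proof.
case=> f0 _; rewrite /edge_flow big_seq_cond; apply: sumr_ge0 => p /andP[Hp _]; exact: f0.
Qed.

Lemma term_pos s e a b :
  (forall x y, 0 <= x -> x < y -> C s e x < C s e y) ->
  0 <= a -> 0 <= b -> a != b -> 0 < (C s e a - C s e b) * (a - b).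
Proof.
move=> Hinc a0 b0; rewrite neq_lt => /orP[Hab|Hab].
  have := Hinc _ _ a0 Hab; nra.
have := Hinc _ _ b0 Hab; nra.
Qed.

Lemma term_ge0 s e a b :
  (forall x y, 0 <= x -> x < y -> C s e x < C s e y) ->
  0 <= a -> 0 <= b -> 0 <= (C s e a - C s e b) * (a - b).
Proof.
move=> Hinc a0 b0; have [->|Hab] := eqVneq a b; first by rewrite !subrr mulr0.
exact/ltW/term_pos.
Qed.

Lemma sum_exp_cost (phi : 'I_m -> R) (f h : seq (V * V) -> R) :
  (forall p, p \in paths -> uniq p) ->
  \sum_(p <- paths) h p * exp_cost paths C phi p f =
  \sum_(e : V * V) Wc phi f e * edge_flow paths h e.
Proof.
move=> Hu; rewrite -additive //; apply: eq_bigr => p _; by rewrite exp_costE.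
Qed.

Lemma edge_flow_unique (phi : 'I_m -> R) (f1 f2 : seq (V * V) -> R) :
  (forall p, p \in paths -> uniq p) ->
  (forall s, 0 <= phi s) -> (exists s, 0 < phi s) ->
  (forall s e x y, 0 <= x -> x < y -> C s e x < C s e y) ->
  wardrop paths C phi f1 -> wardrop paths C phi f2 ->
  forall e, edge_flow paths f1 e = edge_flow paths f2 e.
Proof.
move=> Hu phi0 [s0 Hs0] Hinc [F1 W1] [F2 W2].
have A1 := @le_sum_we f1 f2 (fun p => exp_cost paths C phi p f1) F1 F2 W1.
have A2 := @le_sum_we f2 f1 (fun p => exp_cost paths C phi p f2) F2 F1 W2.
move: A1 A2 => /=; rewrite !sum_exp_cost // => A1 A2.
pose g1 := edge_flow paths f1; pose g2 := edge_flow paths f2.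
have ge1 e : 0 <= g1 e by exact: edge_flow_ge0.
have ge2 e : 0 <= g2 e by exact: edge_flow_ge0.
pose D e := (Wc phi f1 e - Wc phi f2 e) * (g1 e - g2 e).
have DE e : D e = \sum_(s < m) phi s * ((C s e (g1 e) - C s e (g2 e)) * (g1 e - g2 e)).
  rewrite /D /Wc -sumrB big_distrl /=; apply: eq_bigr => s _ /=; rewrite /g1 /g2; ring.
have Dge e : 0 <= D e.
  rewrite DE; apply: sumr_ge0 => s _; apply: mulr_ge0 => //.
  by apply: term_ge0 => //; first exact: Hinc.
have Hsum : \sum_(e : V * V) D e = 0.
  apply/le_anti; rewrite sumr_ge0 // andbT.
  have -> : \sum_(e : V * V) D e =
    (\sum_e Wc phi f1 e * g1 e - \sum_e Wc phi f1 e * g2 e) +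
    (\sum_e Wc phi f2 e * g2 e - \sum_e Wc phi f2 e * g1 e).
    rewrite -!sumrB -big_split /=; apply: eq_bigr => e _; rewrite /D; ring.
  rewrite /g1 /g2; lra.
move=> e; apply/eqP; apply/negPn/negP => Hne.
have /eqP := Hsum; rewrite psumr_eq0 // => /allP /(_ e (mem_index_enum e)) /=.
rewrite DE (bigD1 s0) //= => /eqP Heq.
have H1 : 0 < phi s0 * ((C s0 e (g1 e) - C s0 e (g2 e)) * (g1 e - g2 e)).
  by apply: mulr_gt0 => //; apply: term_pos => //; first exact: Hinc.
have H2 : 0 <= \sum_(s < m | s != s0) phi s * ((C s e (g1 e) - C s e (g2 e)) * (g1 e - g2 e)).
  apply: sumr_ge0 => s _; apply: mulr_ge0 => //.
  by apply: term_ge0 => //; first exact: Hinc.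
lra.
Qed.


Lemma S_incl (z : nat) (Phi : 'M[R]_(z, m)) (u : 'I_z) (f1 f2 : seq (V * V) -> R) psi :
  (forall p, p \in paths -> uniq p) ->
  feasible paths f1 -> feasible paths f2 ->
  (forall e, edge_flow paths f1 e = edge_flow paths f2 e) ->
  S_set paths C Phi u f1 psi -> S_set paths C Phi u f2 psi.
Proof.
move=> Hu F1 F2 Hg [Hsimp [Heq Hle]]; split => //.
pose phi' := fun s => Phi u s * psi s.
pose E := fun p => exp_cost paths C phi' p f1.
have key1 p r : \sum_(s < m) Phi u s * (path_cost paths C s p f1 - path_cost paths C s r f1) * psi s = E p - E r.
  rewrite /E /exp_cost -sumrB; apply: eq_bigr => s _; rewrite /phi'; ring.
have key2 p r : \sum_(s < m) Phi u s * (path_cost paths C s p f2 - path_cost paths C s r f2) * psi s = E p - E r.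
  rewrite -key1; apply: eq_bigr => s _.
  by rewrite (@path_cost_ext s p f2 f1) // (@path_cost_ext s r f2 f1).
have HW : forall p, p \in paths -> 0 < f1 p -> forall r, r \in paths -> E p <= E r.
  move=> p Hp Hfp r Hr; rewrite -subr_le0 -key1.
  case: F1 => f0 _; have := f0 r Hr; rewrite le_eqVlt => /orP[/eqP H0|Hpos].
    by apply: Hle.
  by rewrite Heq.
have [p0 [Hp0 Hf0]] := @exists_support f1 F1.
have S1 := @sum_at_min f1 E p0 F1 HW Hp0 Hf0.
have S2 : \sum_(p <- paths) f2 p * E p = E p0.
  rewrite -S1 /E !sum_exp_cost //; apply: eq_bigr => e _; by rewrite Hg.
have Hmin := @min_support f2 E (E p0) F2 (fun r Hr => HW p0 Hp0 Hf0 r Hr) S2.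
split.
  by move=> p r Hp Hr Hfp Hfr; rewrite key2 (Hmin p) // (Hmin r) // subrr.
move=> p r Hp Hr Hfp Hfr; rewrite key2 (Hmin p) // subr_le0; exact: HW.
Qed.

End Aux.

Theorem corollary1 (R : realType) (V : finType) (Ed : {set V * V}) (vo vd : V)
  (paths : seq (seq (V * V))) (m z : nat) (C : 'I_m -> V * V -> R -> R)
  (q : 'I_m -> R) (Phi : 'M[R]_(z, m)) (u : 'I_z)
  (f1 f2 : seq (V * V) -> R) :
  enumerates_paths Ed vo vd paths ->
  admissible_costs C ->
  prior q ->
  signalling_scheme Phi ->
  0 < \sum_(l < m) Phi u l * q l ->
  wardrop paths C (posterior Phi q u) f1 ->
  wardrop paths C (posterior Phi q u) f2 ->
  S_set paths C Phi u f1 = S_set paths C Phi u f2.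
Proof.
move=> [Huniq Hpath] Hadm [[q0 q1] qpos] [Phi0 Phi1] HS W1 W2.
have Hu : forall p, p \in paths -> uniq p.
  move=> p /Hpath [_ /=] /andP[_]; exact: map_uniq.
have post0 : forall s, 0 <= posterior Phi q u s.
  move=> s; rewrite /posterior; apply: divr_ge0; last exact: ltW.
  by apply: mulr_ge0 => //; apply: ltW.
have postpos : exists s, 0 < posterior Phi q u s.
  case: (pselect (exists s, 0 < posterior Phi q u s)) => // Hn; exfalso.
  have : \sum_(s < m) posterior Phi q u s = 0.
    rewrite big1 // => s _; apply/eqP; rewrite eq_le post0 andbT leNgt.
    by apply/negP => Hlt; apply: Hn; exists s.
  rewrite /posterior -big_distrl /= mulfV ?gt_eqF //.
  by move/eqP; rewrite oner_eq0.
have Hinc : forall s e x y, 0 <= x -> x < y -> C s e x < C s e y.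
  by move=> s e x y; case: (Hadm s e) => _ [_ H]; exact: H.
have Hg := @edge_flow_unique R V m paths C _ f1 f2 Hu post0 postpos Hinc W1 W2.
case: W1 => F1 _; case: W2 => F2 _.
apply/seteqP; split => psi.
  exact: S_incl.
apply: S_incl => // e; exact/esym.
Qed.
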